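(* Let $X,Y$ be mm-spaces and $F\in\mathcal F^2$. Then for every $\kappa\in(0,1)$ and $\kappa'\in(0,1/4)$, $$\mathrm{OD}(X\times_F Y;-2(\kappa+\kappa'))\le 4F(\mathrm{OD}(X;-\kappa),0)+8F(0,\mathrm{OD}(Y;-\kappa')).$$
   Context: An mm-space is a triple $(X,d_X,m_X)$ with $(X,d_X)$ complete separable metric space and $m_X$ a Borel probability measure. $\mathcal F^2$ is the set of continuous functions $F\colon[0,+\infty)^2\to[0,+\infty)$ such that for any metric spaces $(X,d_X),(Y,d_Y)$, $d_F((x,y),(x',y')):=F(d_X(x,x'),d_Y(y,y'))$ is a metric on $X\times Y$; $X\times_FY:=(X\times Y,d_F,m_X\otimes m_Y)$. Partial diameter: $\mathrm{PD}(X;\alpha)$ = infimum of $\operatorname{diam}A$ over Borel $A$ with $m_X(A)\ge\alpha$. Observable diameter: $\mathrm{OD}(X;-\kappa):=\sup_f\mathrm{PD}((\mathbb R,|\cdot|,f_*m_X);1-\kappa)$ over 1-Lipschitz $f\colon X\to\mathbb R$. *)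

(* Defs.v *)
From Stdlib Require Import Reals.
Open Scope R_scope.

Definition is_metric {T : Type} (d : T -> T -> R) : Prop :=
  (forall x y, 0 <= d x y) /\
  (forall x y, d x y = 0 <-> x = y) /\
  (forall x y, d x y = d y x) /\
  (forall x y z, d x z <= d x y + d y z).

Definition complete_metric {T : Type} (d : T -> T -> R) : Prop :=
  forall u : nat -> T,
    (forall e, 0 < e -> exists N, forall n k, (N <= n)%nat -> (N <= k)%nat -> d (u n) (u k) < e) ->
    exists x, forall e, 0 < e -> exists N, forall n, (N <= n)%nat -> d (u n) x < e.

Definition separable_metric {T : Type} (d : T -> T -> R) : Prop :=
  exists s : nat -> T, forall x e, 0 < e -> exists n, d x (s n) < e.

Definition open_set {T : Type} (d : T -> T -> R) (U : T -> Prop) : Prop :=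
  forall x, U x -> exists e, 0 < e /\ forall y, d x y < e -> U y.

Definition sigma_algebra {T : Type} (S : (T -> Prop) -> Prop) : Prop :=
  S (fun _ => False) /\
  (forall A, S A -> S (fun x => ~ A x)) /\
  (forall A : nat -> T -> Prop, (forall n, S (A n)) -> S (fun x => exists n, A n x)).

Definition borel {T : Type} (d : T -> T -> R) (A : T -> Prop) : Prop :=
  forall S : (T -> Prop) -> Prop, sigma_algebra S -> (forall U, open_set d U -> S U) -> S A.

(** Borel probability measure (values on non-Borel sets are irrelevant). *)
Definition borel_prob_measure {T : Type} (d : T -> T -> R) (m : (T -> Prop) -> R) : Prop :=
  m (fun _ => False) = 0 /\
  (forall A, borel d A -> 0 <= m A) /\
  (forall A : nat -> T -> Prop,
     (forall n, borel d (A n)) ->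
     (forall i j x, i <> j -> A i x -> A j x -> False) ->
     infinite_sum (fun n => m (A n)) (m (fun x => exists n, A n x))) /\
  m (fun _ => True) = 1.

Record mmSpace : Type := MMSpace {
  mm_T : Type;
  mm_d : mm_T -> mm_T -> R;
  mm_m : (mm_T -> Prop) -> R;
  mm_metric : is_metric mm_d;
  mm_complete : complete_metric mm_d;
  mm_separable : separable_metric mm_d;
  mm_prob : borel_prob_measure mm_d mm_m
}.

Definition in_F2 (F : R -> R -> R) : Prop :=
  (forall a b, 0 <= a -> 0 <= b -> forall e, 0 < e -> exists del, 0 < del /\
     forall a' b', 0 <= a' -> 0 <= b' -> Rabs (a' - a) < del -> Rabs (b' - b) < del ->
       Rabs (F a' b' - F a b) < e) /\
  (forall a b, 0 <= a -> 0 <= b -> 0 <= F a b) /\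
  (forall (T1 T2 : Type) (d1 : T1 -> T1 -> R) (d2 : T2 -> T2 -> R),
     is_metric d1 -> is_metric d2 ->
     is_metric (fun p q : T1 * T2 => F (d1 (fst p) (fst q)) (d2 (snd p) (snd q)))).

Definition dF (F : R -> R -> R) (X Y : mmSpace) (p q : mm_T X * mm_T Y) : R :=
  F (mm_d X (fst p) (fst q)) (mm_d Y (snd p) (snd q)).

Definition is_product_measure (F : R -> R -> R) (X Y : mmSpace)
  (m : (mm_T X * mm_T Y -> Prop) -> R) : Prop :=
  borel_prob_measure (dF F X Y) m /\
  forall A B, borel (mm_d X) A -> borel (mm_d Y) B ->
    m (fun p => A (fst p) /\ B (snd p)) = mm_m X A * mm_m Y B.

Definition dR (x y : R) : R := Rabs (x - y).

Definition is_glb (S : R -> Prop) (v : R) : Prop :=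
  (forall r, S r -> v <= r) /\ (forall w, (forall r, S r -> w <= r) -> w <= v).

(** diam A = r, for nonempty A with finite diameter *)
Definition diam_is (A : R -> Prop) (r : R) : Prop :=
  is_lub (fun t => exists x y, A x /\ A y /\ t = Rabs (x - y)) r.

Definition PD_is (mu : (R -> Prop) -> R) (alpha v : R) : Prop :=
  is_glb (fun r => exists A, borel dR A /\ alpha <= mu A /\ diam_is A r) v.

Definition push {T : Type} (f : T -> R) (m : (T -> Prop) -> R) : (R -> Prop) -> R :=
  fun A => m (fun x => A (f x)).

Definition lip1 {T : Type} (d : T -> T -> R) (f : T -> R) : Prop :=
  forall x y, Rabs (f x - f y) <= d x y.

Definition OD_set {T : Type} (d : T -> T -> R) (m : (T -> Prop) -> R) (kappa : R) : R -> Prop :=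
  fun p => exists f, lip1 d f /\ PD_is (push f m) (1 - kappa) p.

Definition OD_is {T : Type} (d : T -> T -> R) (m : (T -> Prop) -> R) (kappa v : R) : Prop :=
  is_lub (OD_set d m kappa) v.

(* Main.v *)
Require Import Defs.
From Stdlib Require Import Reals Lra Lia Classical FunctionalExtensionality PropExtensionality ClassicalEpsilon Cantor.
Require Import Defs.
Open Scope R_scope.

Lemma set_ext {T : Type} (A B : T -> Prop) : (forall x, A x <-> B x) -> A = B.
Proof. intro H; apply functional_extensionality; intro x; apply propositional_extensionality; auto. Qed.

Lemma m_ext {T : Type} (m : (T -> Prop) -> R) (A B : T -> Prop) :
  (forall x, A x <-> B x) -> m A = m B.
Proof. intro H; rewrite (set_ext A B H); reflexivity. Qed.

Lemma borel_ext {T} (d : T -> T -> R) (A B : T -> Prop) :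
  (forall x, A x <-> B x) -> borel d A -> borel d B.
Proof. intros H; rewrite (set_ext A B H); auto. Qed.

Lemma borel_open {T} (d : T -> T -> R) U : open_set d U -> borel d U.
Proof. intros HU S _ HO; apply HO; exact HU. Qed.

Lemma borel_empty {T} (d : T -> T -> R) : borel d (fun _ => False).
Proof. intros S HS _; exact (proj1 HS). Qed.

Lemma borel_compl {T} (d : T -> T -> R) (A : T -> Prop) :
  borel d A -> borel d (fun x => ~ A x).
Proof. intros HA S HS HO; apply (proj1 (proj2 HS)); apply HA; auto. Qed.

Lemma borel_union {T} (d : T -> T -> R) (A : nat -> T -> Prop) :
  (forall n, borel d (A n)) -> borel d (fun x => exists n, A n x).
Proof. intros HA S HS HO; apply (proj2 (proj2 HS)); intro n; apply HA; auto. Qed.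

Lemma borel_full {T} (d : T -> T -> R) : borel d (fun _ => True).
Proof. apply borel_ext with (fun x => ~ False). intros; tauto. apply borel_compl, borel_empty. Qed.

Lemma borel_union2 {T} (d : T -> T -> R) (A B : T -> Prop) :
  borel d A -> borel d B -> borel d (fun x => A x \/ B x).
Proof.
  intros HA HB.
  apply borel_ext with (fun x => exists n:nat, (match n with 0%nat => A | _ => B end) x).
  - intro x; split. intros [[|n] H]; auto. intros [H|H]; [exists 0%nat|exists 1%nat]; auto.
  - apply borel_union; intros [|n]; auto.
Qed.

Lemma borel_inter2 {T} (d : T -> T -> R) (A B : T -> Prop) :
  borel d A -> borel d B -> borel d (fun x => A x /\ B x).
Proof.
  intros HA HB. apply borel_ext with (fun x => ~ (~ A x \/ ~ B x)).
  - intro x; pose proof (classic (A x)); pose proof (classic (B x)); tauto.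
  - apply borel_compl, borel_union2; apply borel_compl; auto.
Qed.

Lemma borel_const {T} (d : T -> T -> R) (P : Prop) : borel d (fun _ => P).
Proof.
  destruct (classic P) as [H|H].
  - apply borel_ext with (fun _ => True). intros; tauto. apply borel_full.
  - apply borel_ext with (fun _ => False). intros; tauto. apply borel_empty.
Qed.

Lemma borel_and_prop {T} (d : T -> T -> R) (P : Prop) (A : T -> Prop) :
  borel d A -> borel d (fun x => P /\ A x).
Proof. intro; apply borel_inter2; auto using borel_const. Qed.

Definition cont_map {T1 T2} (d1 : T1 -> T1 -> R) (d2 : T2 -> T2 -> R) (g : T1 -> T2) : Prop :=
  forall x e, 0 < e -> exists del, 0 < del /\ forall y, d1 x y < del -> d2 (g x) (g y) < e.

Lemma open_preimage {T1 T2} (d1 : T1 -> T1 -> R) (d2 : T2 -> T2 -> R) (g : T1 -> T2) :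
  cont_map d1 d2 g -> forall U, open_set d2 U -> open_set d1 (fun x => U (g x)).
Proof.
  intros Hg U HU x Hx. destruct (HU _ Hx) as [e [He HUe]].
  destruct (Hg x e He) as [del [Hd Hdel]]. exists del; split; auto.
Qed.

Lemma borel_preimage {T1 T2} (d1 : T1 -> T1 -> R) (d2 : T2 -> T2 -> R) (g : T1 -> T2) :
  cont_map d1 d2 g -> forall B, borel d2 B -> borel d1 (fun x => B (g x)).
Proof.
  intros Hg B HB S HS HO.
  apply (HB (fun C => S (fun x => C (g x)))).
  - destruct HS as [H0 [Hc Hu]]; split; [exact H0|split].
    + intros A HA; exact (Hc _ HA).
    + intros A HA; exact (Hu (fun n x => A n (g x)) HA).
  - intros U HU; apply HO. apply (open_preimage d1 d2 g Hg U HU).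
Qed.

Lemma md_refl {T} (d : T -> T -> R) : is_metric d -> forall x, d x x = 0.
Proof. intros [_ [H _]] x; apply H; reflexivity. Qed.
Lemma md_sym {T} (d : T -> T -> R) : is_metric d -> forall x y, d x y = d y x.
Proof. intros [_ [_ [H _]]]; auto. Qed.
Lemma md_tri {T} (d : T -> T -> R) : is_metric d -> forall x y z, d x z <= d x y + d y z.
Proof. intros [_ [_ [_ H]]]; auto. Qed.
Lemma md_pos {T} (d : T -> T -> R) : is_metric d -> forall x y, 0 <= d x y.
Proof. intros [H _]; auto. Qed.

Lemma open_ball {T} (d : T -> T -> R) : is_metric d -> forall c r, open_set d (fun y => d c y < r).
Proof.
  intros Hd c r x Hx. exists (r - d c x); split; [lra|].
  intros y Hy. pose proof (md_tri d Hd c x y). lra.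
Qed.

Lemma abs_lt_bounds x y e : Rabs (x - y) < e -> x - e < y < x + e.
Proof. unfold Rabs; destruct (Rcase_abs _); intros; lra. Qed.
Lemma abs_le_bounds x y e : Rabs (x - y) <= e -> x - e <= y <= x + e.
Proof. unfold Rabs; destruct (Rcase_abs _); intros; lra. Qed.

Lemma dR_metric : is_metric dR.
Proof.
  unfold dR; split; [|split; [|split]].
  - intros; apply Rabs_pos.
  - intros x y; split; intro H.
    + unfold Rabs in H; destruct (Rcase_abs _); lra.
    + subst; replace (y - y) with 0 by ring; apply Rabs_R0.
  - intros; apply Rabs_minus_sym.
  - intros x y z. replace (x - z) with ((x - y) + (y - z)) by ring. apply Rabs_triang.
Qed.

Lemma open_lt a : open_set dR (fun r => r < a).
Proof.
  intros x Hx; exists (a - x); split; [lra|]. intros y Hy; apply abs_lt_bounds in Hy; lra.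
Qed.
Lemma open_gt a : open_set dR (fun r => a < r).
Proof.
  intros x Hx; exists (x - a); split; [lra|]. intros y Hy; apply abs_lt_bounds in Hy; lra.
Qed.
Lemma borel_Ioo a b : borel dR (fun r => a < r < b).
Proof. apply borel_inter2; apply borel_open; [apply open_gt|apply open_lt]. Qed.
Lemma borel_Icc a b : borel dR (fun r => a <= r <= b).
Proof.
  apply borel_ext with (fun r => ~ (r < a \/ b < r)).
  - intro r; split; intro H. lra. lra.
  - apply borel_compl, borel_union2; apply borel_open; [apply open_lt|apply open_gt].
Qed.
Lemma borel_le b : borel dR (fun r => r <= b).
Proof.
  apply borel_ext with (fun r => ~ (b < r)). intro; split; intro; lra.
  apply borel_compl, borel_open, open_gt.
Qed.

Lemma m_empty {T} (d : T -> T -> R) m : borel_prob_measure d m -> m (fun _ => False) = 0.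
Proof. intros [H _]; exact H. Qed.
Lemma m_nonneg {T} (d : T -> T -> R) m : borel_prob_measure d m -> forall A, borel d A -> 0 <= m A.
Proof. intros [_ [H _]]; exact H. Qed.
Lemma m_full {T} (d : T -> T -> R) m : borel_prob_measure d m -> m (fun _ => True) = 1.
Proof. intros [_ [_ [_ H]]]; exact H. Qed.

Lemma m_add2 {T} (d : T -> T -> R) m : borel_prob_measure d m -> forall A B,
  borel d A -> borel d B -> (forall x, A x -> B x -> False) ->
  m (fun x => A x \/ B x) = m A + m B.
Proof.
  intros Hm A B HA HB HAB. pose proof Hm as [H0 [Hp [Hs H1]]].
  set (Aseq := fun n : nat => match n with 0%nat => A | 1%nat => B | _ => fun _ => False end).
  assert (Hsum := Hs Aseq).
  replace (m (fun x => A x \/ B x)) with (m (fun x => exists n, Aseq n x)).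
  2:{ apply m_ext; intro x; split.
      - intros [[|[|n]] H]; simpl in H; tauto.
      - intros [H|H]; [exists 0%nat|exists 1%nat]; exact H. }
  apply (uniqueness_sum (fun n => m (Aseq n))).
  - apply Hsum.
    + intros [|[|n]]; simpl; auto using borel_empty.
    + intros [|[|i]] [|[|j]] x Hij; simpl; try tauto; eauto.
  - assert (Hps : forall n, sum_f_R0 (fun n => m (Aseq n)) (S n) = m A + m B).
    { induction n. simpl; ring. simpl sum_f_R0 in *. rewrite IHn. simpl. rewrite H0; ring. }
    intros eps He; exists 1%nat; intros n Hn.
    destruct n as [|n]; [lia|]. rewrite Hps. unfold Rdist.
    replace (m A + m B - (m A + m B)) with 0 by ring. rewrite Rabs_R0; lra.
Qed.

Lemma m_split {T} (d : T -> T -> R) m : borel_prob_measure d m -> forall A B,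
  borel d A -> borel d B -> m A = m (fun x => A x /\ B x) + m (fun x => A x /\ ~ B x).
Proof.
  intros Hm A B HA HB. rewrite <- (m_add2 d m Hm).
  - apply m_ext; intro x; pose proof (classic (B x)); tauto.
  - apply borel_inter2; auto.
  - apply borel_inter2; auto using borel_compl.
  - intros x; tauto.
Qed.

Lemma m_mono {T} (d : T -> T -> R) m : borel_prob_measure d m -> forall A B,
  borel d A -> borel d B -> (forall x, A x -> B x) -> m A <= m B.
Proof.
  intros Hm A B HA HB HAB. rewrite (m_split d m Hm B A HB HA).
  replace (m (fun x => B x /\ A x)) with (m A) by (apply m_ext; intro x; split; auto; tauto).
  pose proof (m_nonneg d m Hm (fun x => B x /\ ~ A x)). 
  assert (borel d (fun x => B x /\ ~ A x)) by (apply borel_inter2; auto using borel_compl). 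
  specialize (H H0); lra.
Qed.

Lemma m_le1 {T} (d : T -> T -> R) m : borel_prob_measure d m -> forall A, borel d A -> m A <= 1.
Proof.
  intros Hm A HA. rewrite <- (m_full d m Hm). apply (m_mono d m Hm); auto using borel_full.
Qed.

Lemma m_compl {T} (d : T -> T -> R) m : borel_prob_measure d m -> forall A, borel d A ->
  m (fun x => ~ A x) = 1 - m A.
Proof.
  intros Hm A HA. rewrite <- (m_full d m Hm).
  rewrite (m_split d m Hm (fun _ => True) A (borel_full d) HA).
  replace (m (fun x => True /\ A x)) with (m A) by (apply m_ext; intro; tauto).
  replace (m (fun x => True /\ ~ A x)) with (m (fun x => ~ A x)) by (apply m_ext; intro; tauto).
  ring.
Qed.

Lemma mono_nat {T} (A : nat -> T -> Prop) : (forall n x, A n x -> A (S n) x) ->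
  forall i j x, (i <= j)%nat -> A i x -> A j x.
Proof.
  intros H i j x Hij. induction Hij; auto.
Qed.

Lemma m_below {T} (d : T -> T -> R) m : borel_prob_measure d m -> forall (A : nat -> T -> Prop),
  (forall n, borel d (A n)) -> (forall n x, A n x -> A (S n) x) ->
  forall v, v < m (fun x => exists n, A n x) -> exists n, v < m (A n).
Proof.
  intros Hm A HA Hinc v Hv.
  pose proof Hm as [H0 [Hp [Hs H1]]].
  set (D := fun n => match n with 0%nat => A 0%nat | S k => fun x => A (S k) x /\ ~ A k x end).
  assert (HD : forall n, borel d (D n)).
  { intros [|k]; simpl; auto. apply borel_inter2; auto using borel_compl. }
  assert (HDA : forall n x, D n x -> A n x). { intros [|k] x; simpl; tauto. }
  assert (Hdisj0 : forall i j x, (i < j)%nat -> D i x -> D j x -> False).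
  { intros i [|k] x Hij Hi Hj; [lia|]. simpl in Hj. destruct Hj as [_ Hj]. apply Hj.
    apply (mono_nat A Hinc i k); [lia|]. auto. }
  assert (Hdisj : forall i j x, i <> j -> D i x -> D j x -> False).
  { intros i j x Hij Hi Hj. destruct (Nat.lt_ge_cases i j).
    - eapply Hdisj0; eauto.
    - eapply Hdisj0 with (i := j) (j := i); eauto. lia. }
  assert (Hun : m (fun x => exists n, D n x) = m (fun x => exists n, A n x)).
  { apply m_ext; intro x; split.
    - intros [n Hn]; exists n; auto.
    - intros [n Hn]. induction n.
      + exists 0%nat; exact Hn.
      + destruct (classic (A n x)); auto. exists (S n); simpl; auto. }
  assert (Hpart : forall n, sum_f_R0 (fun k => m (D k)) n = m (A n)).
  { induction n; simpl; auto. rewrite IHn.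
    rewrite (m_split d m Hm (A (S n)) (A n) (HA _) (HA _)).
    replace (m (fun x => A (S n) x /\ A n x)) with (m (A n)) by (apply m_ext; intro x; split; auto; tauto).
    reflexivity. }
  pose proof (Hs D HD Hdisj) as Hsum. rewrite Hun in Hsum.
  destruct (Hsum (m (fun x => exists n, A n x) - v)) as [N HN]; [lra|].
  exists N. specialize (HN N (le_n _)). rewrite Hpart in HN. unfold Rdist in HN.
  apply abs_lt_bounds in HN. lra.
Qed.

Lemma m_pos_nonempty {T} (d : T -> T -> R) m : borel_prob_measure d m -> forall A,
  0 < m A -> exists x, A x.
Proof.
  intros Hm A H. destruct (classic (exists x, A x)) as [|Hn]; auto.
  rewrite (m_ext m A (fun _ => False)) in H. rewrite (m_empty d m Hm) in H; lra.
  intro x; split; [intro; apply Hn; eauto|tauto].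
Qed.

Lemma glb_exists (E : R -> Prop) : (exists r, E r) -> (exists w, forall r, E r -> w <= r) ->
  exists v, is_glb E v.
Proof.
  intros [r0 Hr0] [w Hw].
  destruct (completeness (fun r => E (- r))) as [l [Hl1 Hl2]].
  - exists (- w). intros r Hr. specialize (Hw _ Hr). lra.
  - exists (- r0). rewrite Ropp_involutive; auto.
  - exists (- l). split.
    + intros r Hr. assert (- r <= l). { apply Hl1. rewrite Ropp_involutive; auto. } lra.
    + intros w' Hw'. assert (l <= - w'). { apply Hl2. intros r Hr. specialize (Hw' _ Hr). lra. } lra.
Qed.

Lemma diam_Icc a b : a <= b -> diam_is (fun r => a <= r <= b) (b - a).
Proof.
  intros Hab; split.
  - intros t [x [y [Hx [Hy ->]]]]. unfold Rabs; destruct (Rcase_abs _); lra.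
  - intros w Hw. apply Hw. exists b, a. split; [lra|split; [lra|]].
    rewrite Rabs_right; lra.
Qed.

Lemma diam_nonneg A r : diam_is A r -> 0 <= r.
Proof.
  intros [H1 H2]. destruct (classic (exists x, A x)) as [[x Hx]|Hn].
  - apply H1. exists x, x. repeat split; auto. replace (x - x) with 0 by ring. rewrite Rabs_R0; auto.
  - assert (r <= r - 1); [|lra]. apply H2. intros t [x [y [Hx _]]]. exfalso; eauto.
Qed.

Lemma lip1_cont {T} (d : T -> T -> R) (h : T -> R) : lip1 d h -> cont_map d dR h.
Proof. intros Hh x e He; exists e; split; auto. intros y Hy; unfold dR; specialize (Hh x y); lra. Qed.

Lemma PD_exists {T} (d : T -> T -> R) m : is_metric d -> borel_prob_measure d m ->
  forall h kappa, lip1 d h -> 0 < kappa -> exists p, PD_is (push h m) (1 - kappa) p /\ 0 <= p.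
Proof.
  intros Hd Hm h kappa Hh Hk.
  set (B := fun (n : nat) x => - INR n <= h x <= INR n).
  assert (HB : forall n, borel d (B n)).
  { intro n; apply (borel_preimage d dR h (lip1_cont d h Hh) _ (borel_Icc _ _)). }
  assert (HBi : forall n x, B n x -> B (S n) x).
  { intros n x; unfold B; rewrite S_INR; lra. }
  destruct (m_below d m Hm B HB HBi (1 - kappa)) as [n Hn].
  { rewrite (m_ext m _ (fun _ => True)). rewrite (m_full d m Hm); lra.
    intro x; split; auto. intros _. destruct (INR_unbounded (Rabs (h x))) as [n Hn].
    exists n. unfold B. pose proof (Rle_abs (h x)). pose proof (Rle_abs (- h x)). rewrite Rabs_Ropp in H0. lra. }
  destruct (glb_exists (fun r => exists A, borel dR A /\ 1 - kappa <= push h m A /\ diam_is A r)) as [p Hp].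
  - exists (INR n - - INR n). exists (fun r => - INR n <= r <= INR n). split; [apply borel_Icc|split].
    + unfold push. fold (B n). lra.
    + apply diam_Icc. pose proof (pos_INR n); lra.
  - exists 0. intros r [A [_ [_ HA]]]. eapply diam_nonneg; eauto.
  - exists p; split; auto. apply (proj2 Hp). intros r [A [_ [_ HA]]]. eapply diam_nonneg; eauto.
Qed.

Lemma a_nonneg {T} (d : T -> T -> R) m : is_metric d -> borel_prob_measure d m ->
  forall kappa a, 0 < kappa -> OD_is d m kappa a -> 0 <= a.
Proof.
  intros Hd Hm kappa a Hk Ha.
  assert (Hl : lip1 d (fun _ => 0)). { intros x y. replace (0-0) with 0 by ring. rewrite Rabs_R0. apply (md_pos d Hd). }
  destruct (PD_exists d m Hd Hm _ kappa Hl Hk) as [p [Hp Hp0]].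
  assert (p <= a). { apply (proj1 Ha). exists (fun _ => 0); split; auto. } lra.
Qed.

Lemma dist_fun_exists {T} (d : T -> T -> R) : is_metric d -> forall (S : T -> Prop), (exists s, S s) ->
  exists h : T -> R, (forall x s, S s -> h x <= d x s) /\
     (forall x w, (forall s, S s -> w <= d x s) -> w <= h x).
Proof.
  intros Hd S [s0 Hs0].
  assert (H : forall x, exists v, is_glb (fun r => exists s, S s /\ r = d x s) v).
  { intro x. apply glb_exists. exists (d x s0); eauto. exists 0. intros r [s [_ ->]]. apply (md_pos d Hd). }
  exists (fun x => proj1_sig (constructive_indefinite_description _ (H x))). split.
  - intros x s Hs. destruct (constructive_indefinite_description _ (H x)) as [v [Hv1 Hv2]]; simpl.
    apply Hv1; eauto.
  - intros x w Hw. destruct (constructive_indefinite_description _ (H x)) as [v [Hv1 Hv2]]; simpl.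
    apply Hv2. intros r [s [Hs ->]]; auto.
Qed.

Lemma OD_step {T} (d : T -> T -> R) m : is_metric d -> borel_prob_measure d m ->
  forall kappa a, 0 < kappa -> OD_is d m kappa a ->
  forall S, borel d S -> kappa < m S -> forall eta, 0 < eta ->
  1 - kappa <= m (fun x => exists s, S s /\ d x s < a + eta).
Proof.
  intros Hd Hm kappa a Hk Ha S HS HSk eta He.
  destruct (dist_fun_exists d Hd S) as [h [Hh1 Hh2]].
  { apply (m_pos_nonempty d m Hm). lra. }
  assert (Hh0 : forall x, 0 <= h x). { intro x; apply Hh2; intros; apply (md_pos d Hd). }
  assert (Hlip : lip1 d h).
  { intros x y. apply Rabs_le; split.
    - assert (h y - d x y <= h x); [|lra]. apply Hh2. intros s Hs.
      pose proof (Hh1 y s Hs). pose proof (md_tri d Hd y x s). rewrite (md_sym d Hd y x) in H0. lra.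
    - assert (h x - d x y <= h y); [|lra]. apply Hh2. intros s Hs.
      pose proof (Hh1 x s Hs). pose proof (md_tri d Hd x y s). lra. }
  destruct (PD_exists d m Hd Hm h kappa Hlip Hk) as [ph [Hph _]].
  assert (Hpa : ph <= a). { apply (proj1 Ha). exists h; split; auto. }
  destruct (classic (exists r, (exists A, borel dR A /\ 1 - kappa <= push h m A /\ diam_is A r) /\ r < ph + eta))
    as [[r [[A [HA [HmA Hdiam]]] Hr]]|Hn].
  2:{ exfalso. assert (ph + eta <= ph); [|lra]. apply (proj2 Hph). intros r Hr.
      apply Rnot_lt_le. intro; apply Hn; eauto. }
  assert (HAh : borel d (fun x => A (h x))) by (apply (borel_preimage d dR h (lip1_cont d h Hlip)); auto).
  assert (Hopen : borel d (fun x => exists s, S s /\ d x s < a + eta)).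
  { apply borel_open. intros x [s [Hs Hxs]]. exists (a + eta - d x s); split; [lra|].
    intros y Hy. exists s; split; auto. pose proof (md_tri d Hd y x s). rewrite (md_sym d Hd y x) in H. lra. }
  destruct (classic (exists x0, S x0 /\ A (h x0))) as [[x0 [Hx0S Hx0A]]|Hn].
  2:{ exfalso. pose proof (m_add2 d m Hm S (fun x => A (h x)) HS HAh) as Hadd.
      assert (Hle := m_le1 d m Hm (fun x => S x \/ A (h x)) (borel_union2 d _ _ HS HAh)).
      rewrite Hadd in Hle. unfold push in HmA. lra.
      intros x H1 H2; apply Hn; eauto. }
  assert (Hhx0 : h x0 = 0). { pose proof (Hh1 x0 x0 Hx0S). rewrite (md_refl d Hd) in H. pose proof (Hh0 x0). lra. }
  eapply Rle_trans; [exact HmA|]. unfold push. apply (m_mono d m Hm); auto.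
  intros x Hx. assert (Habs : Rabs (h x - h x0) <= r). { apply (proj1 Hdiam). exists (h x), (h x0); auto. }
  rewrite Hhx0 in Habs. rewrite Rminus_0_r, Rabs_right in Habs by apply Rle_ge, Hh0.
  destruct (classic (exists s, S s /\ d x s < a + eta)) as [|Hn2]; auto.
  exfalso. assert (a + eta <= h x); [|lra]. apply Hh2. intros s Hs. apply Rnot_lt_le. intro; apply Hn2; eauto.
Qed.

Definition Qt (L : R -> R) (k u : R) : Prop :=
  (forall t, u < t -> k < L t) /\ (forall t, t < u -> L t <= k).

Lemma borel_g_le {T} (d : T -> T -> R) (g : T -> R) : cont_map d dR g -> forall t,
  borel d (fun x => g x <= t).
Proof. intros Hg t; apply (borel_preimage d dR g Hg _ (borel_le t)). Qed.

Lemma L_mono {T} (d : T -> T -> R) m : borel_prob_measure d m -> forall g, cont_map d dR g ->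
  forall t t', t <= t' -> m (fun x => g x <= t) <= m (fun x => g x <= t').
Proof.
  intros Hm g Hg t t' H. apply (m_mono d m Hm); auto using borel_g_le. intros; lra.
Qed.

Lemma Qt_exists {T} (d : T -> T -> R) m : borel_prob_measure d m -> forall g, cont_map d dR g ->
  forall kappa, 0 < kappa < 1 -> exists u, Qt (fun t => m (fun x => g x <= t)) kappa u.
Proof.
  intros Hm g Hg kappa Hk.
  assert (HL := L_mono d m Hm g Hg).
  destruct (m_below d m Hm (fun n x => g x <= INR n) (fun n => borel_g_le d g Hg _)) with (v := kappa)
    as [n1 Hn1].
  { intros n x; rewrite S_INR; lra. }
  { rewrite (m_ext m _ (fun _ => True)). rewrite (m_full d m Hm); lra.
    intro x; split; auto. intros _. destruct (INR_unbounded (g x)) as [n Hn]. exists n; lra. }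
  assert (Hc : forall n, borel d (fun x => - INR n < g x)).
  { intro n. apply borel_ext with (fun x => ~ (g x <= - INR n)). intro; split; intro; lra.
    apply borel_compl, borel_g_le; auto. }
  destruct (m_below d m Hm (fun n x => - INR n < g x) Hc) with (v := 1 - kappa) as [n0 Hn0].
  { intros n x; rewrite S_INR; lra. }
  { rewrite (m_ext m _ (fun _ => True)). rewrite (m_full d m Hm); lra.
    intro x; split; auto. intros _. destruct (INR_unbounded (- g x)) as [n Hn]. exists n; lra. }
  assert (Hlow : m (fun x => g x <= - INR n0) < kappa).
  { rewrite (m_ext m _ (fun x => ~ (- INR n0 < g x))). rewrite (m_compl d m Hm); auto. lra.
    intro; split; intro; lra. }
  destruct (glb_exists (fun t => kappa < m (fun x => g x <= t))) as [q [Hq1 Hq2]].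
  - exists (INR n1); auto.
  - exists (- INR n0). intros t Ht. apply Rnot_lt_le; intro Hlt.
    pose proof (HL t (- INR n0) (Rlt_le _ _ Hlt)). lra.
  - exists q; split.
    + intros t Ht. destruct (classic (exists t', kappa < m (fun x => g x <= t') /\ t' < t)) as [[t' [H1 H2]]|Hn].
      * pose proof (HL t' t (Rlt_le _ _ H2)); lra.
      * exfalso. assert (t <= q); [|lra]. apply Hq2. intros r Hr. apply Rnot_lt_le; intro; apply Hn; eauto.
    + intros t Ht. apply Rnot_lt_le. intro H. pose proof (Hq1 t H). lra.
Qed.

Lemma Qt_shift {T} (d : T -> T -> R) m : borel_prob_measure d m -> forall g1 g2,
  cont_map d dR g1 -> cont_map d dR g2 -> forall c kappa u1 u2,
  (forall x, g1 x <= g2 x + c) ->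
  Qt (fun t => m (fun x => g1 x <= t)) kappa u1 ->
  Qt (fun t => m (fun x => g2 x <= t)) kappa u2 -> u1 <= u2 + c.
Proof.
  intros Hm g1 g2 H1 H2 c kappa u1 u2 Hg [Hq1 Hq1'] [Hq2 Hq2'].
  apply Rnot_lt_le; intro Hlt.
  set (t := (u2 + (u1 - c)) / 2).
  assert (A1 := Hq2 t ltac:(unfold t; lra)).
  assert (A2 := Hq1' (t + c) ltac:(unfold t; lra)).
  assert (m (fun x => g2 x <= t) <= m (fun x => g1 x <= t + c)).
  { apply (m_mono d m Hm); auto using borel_g_le. intros x Hx; specialize (Hg x); lra. }
  lra.
Qed.

Lemma conc {T} (d : T -> T -> R) m : is_metric d -> borel_prob_measure d m ->
  forall kappa a, 0 < kappa -> OD_is d m kappa a ->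
  forall (g : T -> R) (w : R -> R), cont_map d dR g ->
  (forall x y, Rabs (g x - g y) <= w (d x y)) ->
  (forall t r, 0 <= t <= 2 * r -> w t <= 2 * w r) ->
  forall u, Qt (fun t => m (fun x => g x <= t)) kappa u ->
  forall del eta, 0 < del -> 0 < eta ->
  1 - 2 * kappa <= m (fun x => u - del < g x < u + del + 2 * w (a + eta)).
Proof.
  intros Hd Hm kappa a Hk Ha g w Hgc Hgw Hw2 u [Hu1 Hu2] del eta Hdel Heta.
  assert (Ha0 := a_nonneg d m Hd Hm kappa a Hk Ha).
  set (S := fun x => g x <= u + del / 2).
  assert (HS : borel d S) by (apply borel_g_le; auto).
  assert (HSk : kappa < m S) by (apply Hu1; lra).
  pose proof (OD_step d m Hd Hm kappa a Hk Ha S HS HSk eta Heta) as HN.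
  set (N := fun x => exists s, S s /\ d x s < a + eta).
  fold N in HN.
  assert (HNb : borel d N).
  { apply borel_open. intros x [s [Hs Hxs]]. exists (a + eta - d x s); split; [lra|].
    intros y Hy. exists s; split; auto. pose proof (md_tri d Hd y x s). rewrite (md_sym d Hd y x) in H. lra. }
  set (Low := fun x => g x <= u - del).
  assert (HLb : borel d Low) by (apply borel_g_le; auto).
  assert (HLk : m Low <= kappa) by (apply Hu2; lra).
  assert (Htb : borel d (fun x => u - del < g x < u + del + 2 * w (a + eta))).
  { apply (borel_preimage d dR g Hgc _ (borel_Ioo _ _)). }
  rewrite (m_split d m Hm N Low HNb HLb) in HN.
  assert (m (fun x => N x /\ Low x) <= m Low).
  { apply (m_mono d m Hm); auto. apply borel_inter2; auto. tauto. }
  assert (m (fun x => N x /\ ~ Low x) <= m (fun x => u - del < g x < u + del + 2 * w (a + eta))).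
  { apply (m_mono d m Hm); auto. apply borel_inter2; auto using borel_compl.
    intros x [[s [Hs Hxs]] Hl]. unfold Low in Hl. unfold S in Hs.
    pose proof (Hgw x s). apply abs_le_bounds in H0.
    assert (w (d x s) <= 2 * w (a + eta)).
    { apply Hw2. pose proof (md_pos d Hd x s). lra. }
    lra. }
  lra.
Qed.

Lemma F_metric {T1 T2} (F : R -> R -> R) : in_F2 F -> forall (d1 : T1 -> T1 -> R) (d2 : T2 -> T2 -> R),
  is_metric d1 -> is_metric d2 ->
  is_metric (fun p q : T1 * T2 => F (d1 (fst p) (fst q)) (d2 (snd p) (snd q))).
Proof. intros HF; apply HF. Qed.

Lemma F00 F : in_F2 F -> F 0 0 = 0.
Proof.
  intros HF. pose proof (F_metric F HF dR dR dR_metric dR_metric) as Hm.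
  pose proof (md_refl _ Hm (0,0)). simpl in H. unfold dR in H.
  replace (0 - 0) with 0 in H by ring. rewrite Rabs_R0 in H; exact H.
Qed.

Lemma F_nonneg F : in_F2 F -> forall s t, 0 <= s -> 0 <= t -> 0 <= F s t.
Proof. intros HF; apply HF. Qed.

Lemma Fs0_pos F : in_F2 F -> forall s, 0 < s -> 0 < F s 0.
Proof.
  intros HF s Hs. pose proof (F_metric F HF dR dR dR_metric dR_metric) as Hm.
  destruct Hm as [Hp [Hid _]].
  specialize (Hp (s,0) (0,0)). specialize (Hid (s,0) (0,0)). simpl in *. unfold dR in *.
  replace (s - 0) with s in * by ring. replace (0 - 0) with 0 in * by ring.
  rewrite Rabs_R0 in *. rewrite Rabs_right in * by lra.
  destruct Hp as [Hlt|Heq]; auto. exfalso. symmetry in Heq. apply Hid in Heq. injection Heq; lra.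
Qed.

Inductive three := P0 | P1 | P2.
Definition d3 (t r : R) (x y : three) : R :=
  match x, y with
  | P0, P0 | P1, P1 | P2, P2 => 0
  | P0, P1 | P1, P0 => t
  | _, _ => r
  end.

Lemma d3_metric t r : 0 < t -> t <= 2 * r -> is_metric (d3 t r).
Proof.
  intros Ht Hr. split; [|split; [|split]].
  - intros [] []; simpl; lra.
  - intros [] []; simpl; split; intro H; try lra; try discriminate; auto.
  - intros [] []; simpl; auto.
  - intros [] [] []; simpl; lra.
Qed.

Definition du (x y : unit) : R := 0.
Lemma du_metric : is_metric du.
Proof.
  unfold du; split; [|split; [|split]]; intros; try lra.
  destruct x, y; split; auto.
Qed.

Lemma F_tri1 F : in_F2 F -> forall t r, 0 <= t <= 2 * r -> F t 0 <= 2 * F r 0.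
Proof.
  intros HF t r Ht. destruct (Req_dec t 0) as [->|Ht0].
  - rewrite F00 by auto. pose proof (F_nonneg F HF r 0 ltac:(lra) ltac:(lra)). lra.
  - pose proof (F_metric F HF (d3 t r) du (d3_metric t r ltac:(lra) ltac:(lra)) du_metric) as Hm.
    pose proof (md_tri _ Hm (P0, tt) (P2, tt) (P1, tt)). simpl in H. unfold du in H. lra.
Qed.

Lemma F_tri2 F : in_F2 F -> forall t r, 0 <= t <= 2 * r -> F 0 t <= 2 * F 0 r.
Proof.
  intros HF t r Ht. destruct (Req_dec t 0) as [->|Ht0].
  - rewrite F00 by auto. pose proof (F_nonneg F HF 0 r ltac:(lra) ltac:(lra)). lra.
  - pose proof (F_metric F HF du (d3 t r) du_metric (d3_metric t r ltac:(lra) ltac:(lra))) as Hm.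
    pose proof (md_tri _ Hm (tt, P0) (tt, P2) (tt, P1)). simpl in H. unfold du in H. lra.
Qed.

Lemma F_lower F : in_F2 F -> forall s t, 0 <= s -> 0 <= t -> F (2 * s) 0 <= 2 * F s t.
Proof.
  intros HF s t Hs Ht. pose proof (F_metric F HF dR dR dR_metric dR_metric) as Hm.
  pose proof (md_tri _ Hm (0, 0) (s, t) (2 * s, 0)). simpl in H. unfold dR in H.
  replace (0 - 2 * s) with (- (2 * s)) in H by ring. replace (0 - 0) with 0 in H by ring.
  replace (0 - s) with (- s) in H by ring. replace (0 - t) with (- t) in H by ring.
  replace (s - 2 * s) with (- s) in H by ring. replace (t - 0) with t in H by ring.
  rewrite !Rabs_Ropp, Rabs_R0, !Rabs_right in H by lra. lra.
Qed.

Lemma F_fst_small F : in_F2 F -> forall e, 0 < e -> exists del, 0 < del /\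
  forall s t, 0 <= s -> 0 <= t -> F s t < del -> s < e.
Proof.
  intros HF e He. exists (F e 0 / 4). split. pose proof (Fs0_pos F HF e He); lra.
  intros s t Hs Ht H. apply Rnot_le_lt; intro Hse.
  pose proof (F_tri1 F HF e (2 * s) ltac:(lra)). pose proof (F_lower F HF s t Hs Ht). lra.
Qed.

Lemma F_cont0 F : in_F2 F -> forall e, 0 < e -> exists del, 0 < del /\
  forall s t, 0 <= s -> 0 <= t -> s < del -> t < del -> F s t < e.
Proof.
  intros HF e He. destruct (proj1 HF 0 0 (Rle_refl _) (Rle_refl _) e He) as [del [Hd H]].
  exists del; split; auto. intros s t Hs Ht Hsd Htd.
  specialize (H s t Hs Ht). rewrite F00 in H by auto. rewrite !Rminus_0_r in H.
  rewrite !Rabs_right in H by lra. specialize (H Hsd Htd). rewrite Rabs_right in H; auto.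
  apply Rle_ge, F_nonneg; auto.
Qed.

Lemma dF_metric F X Y : in_F2 F -> is_metric (dF F X Y).
Proof. intros HF. unfold dF. apply (F_metric F HF); apply mm_metric. Qed.

Lemma fst_cont F X Y : in_F2 F -> cont_map (dF F X Y) (mm_d X) fst.
Proof.
  intros HF p e He. destruct (F_fst_small F HF e He) as [del [Hd H]]. exists del; split; auto.
  intros q Hq. unfold dF in Hq. apply H in Hq; auto; apply (md_pos _ (mm_metric _)).
Qed.

Lemma F_snd_small F : in_F2 F -> forall e, 0 < e -> exists del, 0 < del /\
  forall s t, 0 <= s -> 0 <= t -> F s t < del -> t < e.
Proof.
  intros HF e He.
  assert (HL : forall s t, 0 <= s -> 0 <= t -> F 0 (2 * t) <= 2 * F s t).
  { intros s t Hs Ht. pose proof (F_metric F HF dR dR dR_metric dR_metric) as Hm.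
    pose proof (md_tri _ Hm (0, 0) (s, t) (0, 2 * t)). simpl in H. unfold dR in H.
    replace (0 - 2 * t) with (- (2 * t)) in H by ring. replace (0 - 0) with 0 in H by ring.
    replace (0 - s) with (- s) in H by ring. replace (0 - t) with (- t) in H by ring.
    replace (t - 2 * t) with (- t) in H by ring. replace (s - 0) with s in H by ring.
    rewrite !Rabs_Ropp, Rabs_R0, !Rabs_right in H by lra. lra. }
  assert (Hpos : 0 < F 0 e).
  { pose proof (F_metric F HF dR dR dR_metric dR_metric) as Hm.
    destruct Hm as [Hp [Hid _]].
    specialize (Hp (0,e) (0,0)). specialize (Hid (0,e) (0,0)). simpl in *. unfold dR in *.
    replace (e - 0) with e in * by ring. replace (0 - 0) with 0 in * by ring.
    rewrite Rabs_R0 in *. rewrite Rabs_right in * by lra.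
    destruct Hp as [Hlt|Heq]; auto. exfalso. symmetry in Heq. apply Hid in Heq. injection Heq; lra. }
  exists (F 0 e / 4). split. lra.
  intros s t Hs Ht H. apply Rnot_le_lt; intro Hse.
  pose proof (F_tri2 F HF e (2 * t) ltac:(lra)). pose proof (HL s t Hs Ht). lra.
Qed.

Lemma snd_cont F X Y : in_F2 F -> cont_map (dF F X Y) (mm_d Y) snd.
Proof.
  intros HF p e He. destruct (F_snd_small F HF e He) as [del [Hd H]]. exists del; split; auto.
  intros q Hq. unfold dF in Hq. apply H in Hq; auto; apply (md_pos _ (mm_metric _)).
Qed.

Lemma borel_rect F X Y : in_F2 F -> forall A B, borel (mm_d X) A -> borel (mm_d Y) B ->
  borel (dF F X Y) (fun p => A (fst p) /\ B (snd p)).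
Proof.
  intros HF A B HA HB. apply borel_inter2.
  - apply (borel_preimage _ _ fst (fst_cont F X Y HF) A HA).
  - apply (borel_preimage _ _ snd (snd_cont F X Y HF) B HB).
Qed.

Definition sec {TX TY : Type} (U : nat -> TX -> Prop) (V : nat -> TY -> Prop) (W : TY -> Prop)
  (N : nat) (x : TX) (y : TY) : Prop :=
  W y \/ exists n, (n < N)%nat /\ U n x /\ V n y.

Lemma sec_borel {TX TY} (dY : TY -> TY -> R) U V W N (x : TX) :
  borel dY W -> (forall n, borel dY (V n)) -> borel dY (sec U V W N x).
Proof.
  intros HW HV. unfold sec. apply borel_union2; auto.
  apply borel_ext with (fun y => exists n, ((n < N)%nat /\ U n x) /\ V n y).
  intro y; split; intros [n Hn]; exists n; tauto.
  apply borel_union; intro n; apply borel_and_prop; auto.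
Qed.

Lemma sec_S_in {TX TY} U V W N (x : TX) (y : TY) : U N x ->
  (sec U V W (S N) x y <-> sec U V (fun y => W y \/ V N y) N x y).
Proof.
  intros HU; unfold sec; split.
  - intros [H|[n [Hn [Hu Hv]]]]; auto.
    destruct (Nat.eq_dec n N) as [->|Hne]; auto. right; exists n; repeat split; auto; lia.
  - intros [[H|H]|[n [Hn [Hu Hv]]]]; auto.
    + right; exists N; repeat split; auto.
    + right; exists n; repeat split; auto.
Qed.

Lemma sec_S_out {TX TY} U V W N (x : TX) (y : TY) : ~ U N x ->
  (sec U V W (S N) x y <-> sec U V W N x y).
Proof.
  intros HU; unfold sec; split.
  - intros [H|[n [Hn [Hu Hv]]]]; auto.
    destruct (Nat.eq_dec n N) as [->|Hne]; [tauto|]. right; exists n; repeat split; auto; lia.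
  - intros [H|[n [Hn [Hu Hv]]]]; auto. right; exists n; repeat split; auto.
Qed.

Lemma sec_mono {TX TY} U V W N (x : TX) (y : TY) : sec U V W N x y -> sec U V W (S N) x y.
Proof. unfold sec; intros [H|[n [Hn H]]]; auto. right; exists n; split; auto. Qed.

Lemma borelA X Y (U : nat -> mm_T X -> Prop) (V : nat -> mm_T Y -> Prop) :
  (forall n, borel (mm_d X) (U n)) -> (forall n, borel (mm_d Y) (V n)) ->
  forall N W theta, borel (mm_d Y) W ->
  borel (mm_d X) (fun x => theta < mm_m Y (sec U V W N x)).
Proof.
  intros HU HV N. induction N; intros W theta HW.
  - apply borel_ext with (fun _ => theta < mm_m Y W); [|apply borel_const].
    intro x. rewrite (m_ext (mm_m Y) (sec U V W 0 x) W); [tauto|].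
    intro y; unfold sec; split; [intros [H|[n [Hn _]]]; auto; lia|auto].
  - apply borel_ext with (fun x => (U N x /\ theta < mm_m Y (sec U V (fun y => W y \/ V N y) N x)) \/
                                   (~ U N x /\ theta < mm_m Y (sec U V W N x))).
    + intro x. destruct (classic (U N x)) as [H|H].
      * rewrite (m_ext (mm_m Y) (sec U V W (S N) x) _ (fun y => sec_S_in U V W N x y H)). tauto.
      * rewrite (m_ext (mm_m Y) (sec U V W (S N) x) _ (fun y => sec_S_out U V W N x y H)). tauto.
    + apply borel_union2; apply borel_inter2; auto using borel_compl.
      apply IHN. apply borel_union2; auto.
Qed.

Lemma sec_rect_borel F X Y : in_F2 F -> forall U V, (forall n, borel (mm_d X) (U n)) ->
  (forall n, borel (mm_d Y) (V n)) ->
  forall N A W, borel (mm_d X) A -> borel (mm_d Y) W ->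
  borel (dF F X Y) (fun p => A (fst p) /\ sec U V W N (fst p) (snd p)).
Proof.
  intros HF U V HU HV N A W HA HW.
  apply borel_ext with (fun p => (A (fst p) /\ W (snd p)) \/
     exists n, (A (fst p) /\ ((n < N)%nat /\ U n (fst p))) /\ V n (snd p)).
  - intro p; unfold sec; split.
    + intros [[Ha Hw]|[n [[Ha [Hn Hu]] Hv]]]; split; auto. right; exists n; auto.
    + intros [Ha [Hw|[n [Hn [Hu Hv]]]]]; [left; auto| right; exists n; tauto].
  - apply borel_union2. apply borel_rect; auto. apply borel_union; intro n.
    apply (borel_rect F X Y HF (fun x => A x /\ ((n < N)%nat /\ U n x)) (V n)); auto.
    apply borel_inter2; auto. apply borel_and_prop; auto.
Qed.

Lemma FubN F X Y m : in_F2 F -> is_product_measure F X Y m -> forall U V,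
  (forall n, borel (mm_d X) (U n)) -> (forall n, borel (mm_d Y) (V n)) ->
  forall N A W c, borel (mm_d X) A -> borel (mm_d Y) W ->
  (forall x, A x -> c <= mm_m Y (sec U V W N x)) ->
  c * mm_m X A <= m (fun p => A (fst p) /\ sec U V W N (fst p) (snd p)).
Proof.
  intros HF [Hm Hprod] U V HU HV N. induction N; intros A W c HA HW Hc.
  - rewrite (m_ext m _ (fun p => A (fst p) /\ W (snd p))).
    2:{ intro p; unfold sec; split; [intros [Ha [Hw|[n [Hn _]]]]; [auto|lia] | intros [Ha Hw]; auto]. }
    rewrite Hprod by auto.
    destruct (classic (exists x, A x)) as [[x Hx]|Hn].
    + specialize (Hc x Hx). rewrite (m_ext (mm_m Y) _ W) in Hc.
      2:{ intro y; unfold sec; split; [intros [Hw|[n [Hn _]]]; [auto|lia]| auto]. }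
      pose proof (m_nonneg _ _ (mm_prob X) A HA). nra.
    + rewrite (m_ext (mm_m X) A (fun _ => False)) by (intro x; split; [intro; apply Hn; eauto|tauto]).
      rewrite (m_empty _ _ (mm_prob X)). pose proof (m_nonneg _ _ (mm_prob Y) W HW). nra.
  - set (A1 := fun x => A x /\ U N x). set (A2 := fun x => A x /\ ~ U N x).
    assert (HA1 : borel (mm_d X) A1) by (apply borel_inter2; auto).
    assert (HA2 : borel (mm_d X) A2) by (apply borel_inter2; auto using borel_compl).
    assert (HW1 : borel (mm_d Y) (fun y => W y \/ V N y)) by (apply borel_union2; auto).
    assert (IH1 := IHN A1 (fun y => W y \/ V N y) c HA1 HW1).
    assert (IH2 := IHN A2 W c HA2 HW).
    rewrite (m_ext m _ (fun p => (A1 (fst p) /\ sec U V (fun y => W y \/ V N y) N (fst p) (snd p)) \/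
                                 (A2 (fst p) /\ sec U V W N (fst p) (snd p)))).
    2:{ intro p. unfold A1, A2. destruct (classic (U N (fst p))) as [H|H].
        - rewrite (sec_S_in U V W N (fst p) (snd p) H). tauto.
        - rewrite (sec_S_out U V W N (fst p) (snd p) H). tauto. }
    rewrite (m_add2 _ m Hm).
    + rewrite (m_split _ _ (mm_prob X) A (U N) HA (HU N)). fold A1 A2.
      assert (c * mm_m X A1 <= m (fun p => A1 (fst p) /\ sec U V (fun y => W y \/ V N y) N (fst p) (snd p))).
      { apply IH1. intros x [Hx Hu]. specialize (Hc x Hx).
        rewrite (m_ext (mm_m Y) _ _ (fun y => sec_S_in U V W N x y Hu)) in Hc; auto. }
      assert (c * mm_m X A2 <= m (fun p => A2 (fst p) /\ sec U V W N (fst p) (snd p))).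
      { apply IH2. intros x [Hx Hu]. specialize (Hc x Hx).
        rewrite (m_ext (mm_m Y) _ _ (fun y => sec_S_out U V W N x y Hu)) in Hc; auto. }
      lra.
    + apply sec_rect_borel; auto.
    + apply sec_rect_borel; auto.
    + intros p [[_ H1] _] [[_ H2] _]; auto.
Qed.

Lemma pair_cont F X Y : in_F2 F -> forall x, cont_map (mm_d Y) (dF F X Y) (fun y => (x, y)).
Proof.
  intros HF x y e He. destruct (F_cont0 F HF e He) as [del [Hd H]]. exists del; split; auto.
  intros y' Hy. unfold dF; simpl. rewrite (md_refl _ (mm_metric X)).
  apply H; auto; try lra. apply (md_pos _ (mm_metric Y)).
Qed.

Lemma fubini_ineq F X Y m : in_F2 F -> is_product_measure F X Y m ->
  forall T, Defs.open_set (dF F X Y) T -> forall A, borel (mm_d X) A -> forall c,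
  (forall x, A x -> c <= mm_m Y (fun y => T (x, y))) ->
  forall eps, 0 < eps -> 0 <= c - eps -> (c - eps) * (mm_m X A - eps) <= m T.
Proof.
  intros HF Hprod T HT A HA c Hc eps He Hce.
  pose proof Hprod as [Hm _].
  destruct (mm_separable X) as [sX HsX]. destruct (mm_separable Y) as [sY HsY].
  set (ix := fun n => fst (Cantor.of_nat (fst (Cantor.of_nat n)))).
  set (jy := fun n => snd (Cantor.of_nat (fst (Cantor.of_nat n)))).
  set (rad := fun n => / (INR (snd (Cantor.of_nat n)) + 1)).
  set (Rs := fun n => forall x y, mm_d X (sX (ix n)) x < rad n -> mm_d Y (sY (jy n)) y < rad n -> T (x, y)).
  set (U := fun n x => Rs n /\ mm_d X (sX (ix n)) x < rad n).
  set (V := fun n y => mm_d Y (sY (jy n)) y < rad n).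
  assert (HU : forall n, borel (mm_d X) (U n)).
  { intro n; apply borel_and_prop, borel_open, open_ball, mm_metric. }
  assert (HV : forall n, borel (mm_d Y) (V n)).
  { intro n; apply borel_open, open_ball, mm_metric. }
  assert (Hcov : forall x y, T (x, y) -> exists n, U n x /\ V n y).
  { intros x y Hxy. destruct (HT _ Hxy) as [e [He' HTe]].
    destruct (F_cont0 F HF e He') as [del [Hdel Hdd]].
    destruct (INR_unbounded (2 / del)) as [k Hk].
    set (r := / (INR k + 1)).
    pose proof (pos_INR k) as Hk0.
    assert (Hr : 0 < r) by (unfold r; apply Rinv_0_lt_compat; lra).
    assert (Hr1 : r * (INR k + 1) = 1) by (unfold r; field; lra).
    assert (H2 : 2 < del * INR k).
    { replace 2 with (2 / del * del) by (field; lra). rewrite (Rmult_comm del).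
      apply Rmult_lt_compat_r; lra. }
    assert (Hr2 : 2 * r < del) by nra.
    destruct (HsX x r Hr) as [i Hi]. destruct (HsY y r Hr) as [j Hj].
    set (n := Cantor.to_nat (Cantor.to_nat (i, j), k)).
    assert (Hix : ix n = i) by (unfold ix, n; rewrite cancel_of_to; change (fst (to_nat (i, j), k)) with (to_nat (i, j)); rewrite cancel_of_to; reflexivity).
    assert (Hjy : jy n = j) by (unfold jy, n; rewrite cancel_of_to; change (fst (to_nat (i, j), k)) with (to_nat (i, j)); rewrite cancel_of_to; reflexivity).
    assert (Hrad : rad n = r) by (unfold rad, n; rewrite cancel_of_to; reflexivity).
    exists n. unfold U, V, Rs. rewrite Hix, Hjy, Hrad.
    rewrite (md_sym _ (mm_metric X) (sX i) x), (md_sym _ (mm_metric Y) (sY j) y).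
    split; [split|]; auto.
    intros x' y' H1 H2'. apply HTe. unfold dF; simpl. apply Hdd; try apply md_pos; try apply mm_metric.
    - pose proof (md_tri _ (mm_metric X) x (sX i) x'). lra.
    - pose proof (md_tri _ (mm_metric Y) y (sY j) y'). lra. }
  set (At := fun N x => A x /\ c - eps < mm_m Y (sec U V (fun _ => False) N x)).
  assert (Hsb : forall N x, borel (mm_d Y) (sec U V (fun _ => False) N x)).
  { intros; apply sec_borel; auto using borel_empty. }
  assert (HAt : forall N, borel (mm_d X) (At N)).
  { intro N; apply borel_inter2; [auto| apply borelA; auto using borel_empty]. }
  assert (HAti : forall N x, At N x -> At (S N) x).
  { intros N x [Hx Hm']. split; auto. eapply Rlt_le_trans; [exact Hm'|].
    apply (m_mono _ _ (mm_prob Y)); auto. intro y; apply sec_mono. }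
  assert (HAun : forall x, A x -> exists N, At N x).
  { intros x Hx.
    destruct (m_below _ _ (mm_prob Y) (fun N => sec U V (fun _ => False) N x) (fun N => Hsb N x)
                (fun N y => sec_mono U V _ N x y) (c - eps)) as [N HN].
    - apply Rlt_le_trans with c; [lra|]. apply Rle_trans with (mm_m Y (fun y => T (x, y))); [apply Hc; auto|].
      apply (m_mono _ _ (mm_prob Y)).
      + apply (borel_preimage (mm_d Y) (dF F X Y) (fun y => (x, y)) (pair_cont F X Y HF x)).
        apply borel_open; auto.
      + apply borel_union; auto.
      + intros y Hy. destruct (Hcov x y Hy) as [n [Hu Hv]]. exists (S n). right. exists n; split; [lia|split; auto].
    - exists N; split; auto. }
  destruct (m_below _ _ (mm_prob X) At HAt HAti (mm_m X A - eps)) as [N HN].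
  { rewrite (m_ext (mm_m X) (fun x => exists n, At n x) A); [lra|]. intro x; split; [intros [N [Hx _]]; auto| intro Hx; apply HAun; auto]. }
  assert (H1 : (c - eps) * mm_m X (At N) <= m (fun p => At N (fst p) /\ sec U V (fun _ => False) N (fst p) (snd p))).
  { apply (FubN F X Y m HF Hprod U V HU HV N (At N) (fun _ => False) (c - eps) (HAt N) (borel_empty _)).
    intros x [_ H]; lra. }
  assert (H2 : m (fun p => At N (fst p) /\ sec U V (fun _ => False) N (fst p) (snd p)) <= m T).
  { apply (m_mono _ _ Hm).
    - apply sec_rect_borel; auto using borel_empty.
    - apply borel_open; auto.
    - intros [x y] [_ [[]|[n [_ [[HRs Hu] Hv]]]]]. apply HRs; auto. }
  assert (H3 : (c - eps) * (mm_m X A - eps) <= (c - eps) * mm_m X (At N)).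
  { apply Rmult_le_compat_l; lra. }
  lra.
Qed.

Lemma open_Ioo a b : Defs.open_set dR (fun r => a < r < b).
Proof.
  intros x Hx. exists (Rmin (x - a) (b - x)). split.
  - apply Rmin_glb_lt; lra.
  - intros y Hy. pose proof (Rmin_l (x - a) (b - x)). pose proof (Rmin_r (x - a) (b - x)).
    apply abs_lt_bounds in Hy. lra.
Qed.

Theorem mainTheorem9 (X Y : mmSpace) (F : R -> R -> R) (HF : in_F2 F)
  (m : (mm_T X * mm_T Y -> Prop) -> R) (Hm : is_product_measure F X Y m)
  (kappa kappa' : R) (Hk : 0 < kappa < 1) (Hk' : 0 < kappa' < 1/4)
  (a b : R) (Ha : OD_is (mm_d X) (mm_m X) kappa a) (Hb : OD_is (mm_d Y) (mm_m Y) kappa' b) :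
  forall p, OD_set (dF F X Y) m (2 * (kappa + kappa')) p ->
    p <= 4 * F a 0 + 8 * F 0 b.
Proof.
  intros p [f [Hf Hp]].
  pose proof Hm as [Hmp _].
  assert (HdF := dF_metric F X Y HF).
  assert (Ha0 := a_nonneg _ _ (mm_metric X) (mm_prob X) kappa a (proj1 Hk) Ha).
  assert (Hb0 := a_nonneg _ _ (mm_metric Y) (mm_prob Y) kappa' b (proj1 Hk') Hb).
  assert (Hfc : cont_map (dF F X Y) dR f) by (apply lip1_cont; auto).
  assert (Hgx : forall x, cont_map (mm_d Y) dR (fun y => f (x, y))).
  { intros x y e He. destruct (pair_cont F X Y HF x y e He) as [del [Hd H]]. exists del; split; auto.
    intros y' Hy'. specialize (H y' Hy'). unfold dR. pose proof (Hf (x,y) (x,y')). lra. }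
  assert (HGex : forall x, exists u, Qt (fun t => mm_m Y (fun y => f (x, y) <= t)) kappa' u).
  { intro x. apply (Qt_exists _ _ (mm_prob Y)); auto. lra. }
  set (G := fun x => proj1_sig (constructive_indefinite_description _ (HGex x))).
  assert (HG : forall x, Qt (fun t => mm_m Y (fun y => f (x, y) <= t)) kappa' (G x)).
  { intro x. unfold G. destruct (constructive_indefinite_description _ (HGex x)); auto. }
  assert (Hff : forall x x' y, f (x, y) <= f (x', y) + F (mm_d X x x') 0).
  { intros x x' y. pose proof (Hf (x,y) (x',y)) as H. unfold dF in H; simpl in H.
    rewrite (md_refl _ (mm_metric Y)) in H. apply abs_le_bounds in H. lra. }
  assert (HGlip : forall x x', Rabs (G x - G x') <= F (mm_d X x x') 0).
  { intros x x'. apply Rabs_le; split.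
    - pose proof (Qt_shift _ _ (mm_prob Y) _ _ (Hgx x') (Hgx x) (F (mm_d X x x') 0) kappa' (G x') (G x)) as H.
      assert (G x' <= G x + F (mm_d X x x') 0).
      { apply H; auto. intro y; rewrite (md_sym _ (mm_metric X) x x'); apply Hff. }
      lra.
    - pose proof (Qt_shift _ _ (mm_prob Y) _ _ (Hgx x) (Hgx x') (F (mm_d X x x') 0) kappa' (G x) (G x')) as H.
      assert (G x <= G x' + F (mm_d X x x') 0) by (apply H; auto). lra. }
  assert (HGc : cont_map (mm_d X) dR G).
  { intros x e He. destruct (F_cont0 F HF e He) as [del [Hd H]]. exists del; split; auto.
    intros x' Hx'. unfold dR. eapply Rle_lt_trans; [apply HGlip|].
    apply H; try lra; apply (md_pos _ (mm_metric X)). }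
  destruct (Qt_exists _ _ (mm_prob X) G HGc kappa Hk) as [u Hu].
  assert (Key : forall del eta, 0 < del -> 0 < eta ->
            p <= 4 * del + 2 * F (a + eta) 0 + 2 * F 0 (b + eta)).
  { intros del eta Hdel Heta.
    set (A := fun x => u - del < G x < u + del + 2 * F (a + eta) 0).
    assert (HA : borel (mm_d X) A) by (apply (borel_preimage _ dR G HGc _ (borel_Ioo _ _))).
    assert (HmA : 1 - 2 * kappa <= mm_m X A).
    { apply (conc _ _ (mm_metric X) (mm_prob X) kappa a (proj1 Hk) Ha G (fun t => F t 0)); auto.
      intros t r Ht; apply F_tri1; auto. }
    set (beta := u + 2 * del + 2 * F (a + eta) 0 + 2 * F 0 (b + eta)).
    set (T := fun q => u - 2 * del < f q < beta).
    assert (HT : Defs.open_set (dF F X Y) T).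
    { apply (open_preimage _ dR f Hfc _ (open_Ioo _ _)). }
    assert (Hsec : forall x, A x -> 1 - 2 * kappa' <= mm_m Y (fun y => T (x, y))).
    { intros x Hx.
      assert (Hc' : 1 - 2 * kappa' <= mm_m Y (fun y => G x - del < f (x, y) < G x + del + 2 * F 0 (b + eta))).
      { apply (conc _ _ (mm_metric Y) (mm_prob Y) kappa' b (proj1 Hk') Hb (fun y => f (x, y)) (fun t => F 0 t) (Hgx x)); auto.
        - intros y y'. pose proof (Hf (x,y) (x,y')) as H. unfold dF in H; simpl in H.
          rewrite (md_refl _ (mm_metric X)) in H. exact H.
        - intros t r Ht; apply F_tri2; auto. }
      eapply Rle_trans; [exact Hc'|]. apply (m_mono _ _ (mm_prob Y)).
      - apply (borel_preimage _ dR _ (Hgx x) _ (borel_Ioo _ _)).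
      - apply (borel_preimage _ _ (fun y => (x,y)) (pair_cont F X Y HF x)). apply borel_open; auto.
      - intros y Hy. unfold T, beta. unfold A in Hx. lra. }
    assert (HmT : 1 - 2 * (kappa + kappa') <= m T).
    { destruct (Rle_dec (1 - 2 * (kappa + kappa')) 0) as [Hle|Hgt].
      - pose proof (m_nonneg _ _ Hmp T (borel_open _ _ HT)). lra.
      - assert (Hce : 0 <= 1 - 2 * kappa' - 2 * kappa * kappa') by nra.
        pose proof (fubini_ineq F X Y m HF Hm T HT A HA (1 - 2 * kappa') Hsec (2 * kappa * kappa')
                      ltac:(nra) Hce) as Hfub.
        assert (H1 : (1 - 2 * kappa' - 2 * kappa * kappa') * (1 - 2 * kappa - 2 * kappa * kappa') <=
                (1 - 2 * kappa' - 2 * kappa * kappa') * (mm_m X A - 2 * kappa * kappa')).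
        { apply Rmult_le_compat_l; lra. }
        assert (H2 : (1 - 2 * kappa' - 2 * kappa * kappa') * (1 - 2 * kappa - 2 * kappa * kappa') =
                  1 - 2 * (kappa + kappa') + 4 * kappa * kappa' * (kappa + kappa') + (2 * kappa * kappa') ^ 2)
          by ring.
        assert (0 <= 4 * kappa * kappa' * (kappa + kappa') + (2 * kappa * kappa') ^ 2).
        { assert (0 < kappa * kappa') by nra. nra. }
        lra. }
    assert (Hpos1 : 0 <= F (a + eta) 0) by (apply F_nonneg; auto; lra).
    assert (Hpos2 : 0 <= F 0 (b + eta)) by (apply F_nonneg; auto; lra).
    apply (proj1 Hp). exists (fun r => u - 2 * del <= r <= beta). split; [apply borel_Icc|split].
    - unfold push. eapply Rle_trans; [exact HmT|]. apply (m_mono _ _ Hmp).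
      + apply borel_open; auto.
      + apply (borel_preimage _ dR f Hfc _ (borel_Icc _ _)).
      + intros q Hq; unfold T in Hq; lra.
    - replace (4 * del + 2 * F (a + eta) 0 + 2 * F 0 (b + eta)) with (beta - (u - 2 * del))
        by (unfold beta; ring).
      apply diam_Icc. unfold beta. lra. }
  assert (Hpa0 : 0 <= F a 0) by (apply F_nonneg; auto; lra).
  assert (Hpb0 : 0 <= F 0 b) by (apply F_nonneg; auto; lra).
  assert (p <= 2 * F a 0 + 2 * F 0 b); [|lra].
  apply Rnot_lt_le; intro Hlt. set (gap := p - (2 * F a 0 + 2 * F 0 b)).
  destruct (proj1 HF a 0 Ha0 (Rle_refl 0) (gap / 8) ltac:(unfold gap; lra)) as [d1 [Hd1 H1]].
  destruct (proj1 HF 0 b (Rle_refl 0) Hb0 (gap / 8) ltac:(unfold gap; lra)) as [d2 [Hd2 H2]].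
  set (eta := Rmin d1 d2 / 2).
  assert (Hmin : 0 < Rmin d1 d2) by (apply Rmin_glb_lt; lra).
  pose proof (Rmin_l d1 d2). pose proof (Rmin_r d1 d2).
  assert (Heta : 0 < eta) by (unfold eta; lra).
  assert (Habs : Rabs eta < d1 /\ Rabs eta < d2 /\ Rabs 0 < d1 /\ Rabs 0 < d2).
  { rewrite Rabs_R0, Rabs_right by lra. unfold eta; lra. }
  specialize (H1 (a + eta) 0 ltac:(lra) (Rle_refl 0)).
  specialize (H2 0 (b + eta) (Rle_refl 0) ltac:(lra)).
  replace (a + eta - a) with eta in H1 by ring. replace (b + eta - b) with eta in H2 by ring.
  rewrite Rminus_0_r in H1, H2.
  assert (A1 := H1 ltac:(tauto) ltac:(tauto)). assert (A2 := H2 ltac:(tauto) ltac:(tauto)).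
  apply abs_lt_bounds in A1. apply abs_lt_bounds in A2.
  pose proof (Key (gap / 16) eta ltac:(unfold gap; lra) Heta).
  unfold gap in *. lra.
Qed.
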